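(* Assume that linear maps $A,B:\mathcal K\to\mathcal K$ are such that $(A,B):\mathcal K\oplus\mathcal K\to\mathcal K$ has maximal rank $\dim\mathcal K$ and $AB^\dagger$ is self-adjoint. Then the function $f(\varkappa)=\det(A-\varkappa B)$ has precisely $n_+(\mathcal M(A,B))$ positive zeroes and $n_-(\mathcal M(A,B))$ negative zeroes (counting multiplicity). If $\varkappa=0$ is a zero of $f$, then its multiplicity equals $\operatorname{Rank}B-n_+(\mathcal M(A,B))-n_-(\mathcal M(A,B))$, which is $\leq n_0(\mathcal M(A,B))$.
   Context: $\mathcal K$ is a finite-dimensional complex Hilbert space (in the paper $\mathcal K\cong\mathbb C^{|\mathcal E|+2|\mathcal I|}$). $\mathcal M(A,B)=\{\chi_1\oplus\chi_2\in\mathcal K\oplus\mathcal K: A\chi_1+B\chi_2=0\}$. $n_+(\mathcal M(A,B))$, $n_-(\mathcal M(A,B))$, $n_0(\mathcal M(A,B))$ denote the numbers (with multiplicity) of positive, negative and zero eigenvalues of the self-adjoint matrix $AB^\dagger$. *)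

(* Defs.v *)
From HB Require Import structures.
From mathcomp Require Import all_boot all_order all_algebra.
From mathcomp Require Import complex.
Set Implicit Arguments. Unset Strict Implicit. Unset Printing Implicit Defensive.
Import Order.TTheory GRing.Theory Num.Theory.
Local Open Scope ring_scope.

Definition adjmx (C : numClosedFieldType) m n (M : 'M[C]_(m, n)) : 'M[C]_(n, m) :=
  map_mx Num.conj M^T.

(* The zeros of a polynomial over an algebraically closed field, listed with
   multiplicity: a sequence r with p = lead_coef p *: \prod_(z <- r) ('X - z). *)
Definition roots_mult (F : closedFieldType) (p : {poly F}) : seq F :=
  sval (closed_field_poly_normal p).

Definition npos_zeros (C : numClosedFieldType) (p : {poly C}) : nat :=
  count (fun z => 0 < z) (roots_mult p).
Definition nneg_zeros (C : numClosedFieldType) (p : {poly C}) : nat :=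
  count (fun z => z < 0) (roots_mult p).

Definition eigenvalues (C : numClosedFieldType) n (M : 'M[C]_n) : seq C :=
  roots_mult (char_poly M).

(* n_+, n_-, n_0 of M(A,B): numbers of positive, negative, zero eigenvalues
   (with multiplicity) of A B^dagger. *)
Definition n_plus (C : numClosedFieldType) n (A B : 'M[C]_n) : nat :=
  count (fun z => 0 < z) (eigenvalues (A *m adjmx B)).
Definition n_minus (C : numClosedFieldType) n (A B : 'M[C]_n) : nat :=
  count (fun z => z < 0) (eigenvalues (A *m adjmx B)).
Definition n_zero (C : numClosedFieldType) n (A B : 'M[C]_n) : nat :=
  count (fun z => z == 0) (eigenvalues (A *m adjmx B)).

Definition detpencil (C : numClosedFieldType) n (A B : 'M[C]_n) : {poly C} :=
  \det (map_mx polyC A - 'X *: map_mx polyC B).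

(* Main.v *)
Require Import Defs.
From HB Require Import structures.
From mathcomp Require Import all_boot all_order all_algebra.
From mathcomp Require Import complex zify.
Import Order.TTheory GRing.Theory Num.Theory.
Local Open Scope ring_scope.
Set Implicit Arguments. Unset Strict Implicit. Unset Printing Implicit Defensive.

Section Adj.
Variable C : numClosedFieldType.
Local Notation adj := (@adjmx C _ _).

Lemma adjmxM m n p (M : 'M[C]_(m, n)) (N : 'M[C]_(n, p)) :
  adjmx (M *m N) = adjmx N *m adjmx M.
Proof. by rewrite /adjmx trmx_mul map_mxM. Qed.

Lemma adjmxK m n (M : 'M[C]_(m, n)) : adjmx (adjmx M) = M.
Proof. by rewrite /adjmx map_trmx trmxK -map_mx_comp (map_mx_id (@conjCK _)). Qed.

Lemma adjmxD m n (M N : 'M[C]_(m, n)) : adjmx (M + N) = adjmx M + adjmx N.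
Proof. by rewrite /adjmx linearD /= map_mxD. Qed.

Lemma adjmxN m n (M : 'M[C]_(m, n)) : adjmx (- M) = - adjmx M.
Proof. by rewrite /adjmx linearN /= map_mxN. Qed.

Lemma adjmx0 m n : adjmx (0 : 'M[C]_(m, n)) = 0.
Proof. by rewrite /adjmx trmx0 map_mx0. Qed.

Lemma adjmx1 n : adjmx (1%:M : 'M[C]_n) = 1%:M.
Proof. by rewrite /adjmx trmx1 map_mx1. Qed.

Lemma adjmx_block m1 m2 n1 n2 (a : 'M[C]_(m1, n1)) (b : 'M[C]_(m1, n2))
  (c : 'M[C]_(m2, n1)) (d : 'M[C]_(m2, n2)) :
  adjmx (block_mx a b c d) = block_mx (adjmx a) (adjmx c) (adjmx b) (adjmx d).
Proof. by rewrite /adjmx tr_block_mx map_block_mx. Qed.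

Lemma adjmx_col m1 m2 n (a : 'M[C]_(m1, n)) (b : 'M[C]_(m2, n)) :
  adjmx (col_mx a b) = row_mx (adjmx a) (adjmx b).
Proof. by rewrite /adjmx tr_col_mx map_row_mx. Qed.

Lemma adjmx_unit n (M : 'M[C]_n) : (adjmx M \in unitmx) = (M \in unitmx).
Proof. by rewrite /adjmx map_unitmx unitmx_tr. Qed.

Lemma unitary_adjE n (P : 'M[C]_n) : P \is unitarymx -> P *m adjmx P = 1%:M.
Proof. by move/unitarymxP. Qed.

Lemma unitary_adjE' n (P : 'M[C]_n) : P \is unitarymx -> adjmx P *m P = 1%:M.
Proof.
move=> PU; have Pu := unitarymx_unit PU.
by rewrite /adjmx -(invmx_unitary PU) mulVmx.
Qed.

End Adj.

Section Sylv.
Variable C : numClosedFieldType.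

Lemma sel_lemma m k (s : 'I_k -> 'I_m) (sinj : injective s) (d : 'rV[C]_m) :
  rowsub s (1%:M : 'M[C]_m) *m diag_mx d *m adjmx (rowsub s (1%:M : 'M[C]_m))
  = diag_mx (\row_j d 0 (s j)).
Proof.
apply/matrixP => i j; rewrite mul_mx_diag !mxE (bigD1 (s i)) //= big1.
  rewrite !mxE eqxx addr0 mul1r (inj_eq sinj) eq_sym.
  by case: eqP => _; rewrite ?conjC1 ?conjC0 ?mulr1 ?mulr0.
move=> b /negPf nb; rewrite !mxE eq_sym nb.
by rewrite !mul0r.
Qed.

Lemma qform_diag m (y e : 'rV[C]_m) :
  (y *m diag_mx e *m adjmx y) 0 0 = \sum_j e 0 j * (y 0 j * (y 0 j)^*).
Proof.
rewrite mul_mx_diag !mxE; apply: eq_bigr => j _; rewrite !mxE.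
by rewrite mulrAC mulrC mulrA.
Qed.

Lemma qform_pos m (y e : 'rV[C]_m) : y != 0 -> (forall j, 0 < e 0 j) ->
  0 < (y *m diag_mx e *m adjmx y) 0 0.
Proof.
move=> y0 ep; rewrite qform_diag.
suff /existsP[i yi] : [exists i, y 0 i != 0].
  rewrite (bigD1 i) //= ltr_wpDr ?sumr_ge0 //.
    by move=> j _; rewrite mulr_ge0 ?mul_conjC_ge0 // ltW.
  by rewrite mulr_gt0 ?mul_conjC_gt0.
apply: contraNT y0; rewrite negb_exists => /forallP yN.
by apply/eqP/rowP=> j; rewrite mxE; apply/eqP; rewrite -[_ == _]negbK yN.
Qed.

Lemma qform_npos m (y e : 'rV[C]_m) : (forall j, e 0 j <= 0) ->
  (y *m diag_mx e *m adjmx y) 0 0 <= 0.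
Proof.
move=> en; rewrite qform_diag sumr_le0 // => j _.
by rewrite mulr_le0_ge0 ?mul_conjC_ge0.
Qed.


Lemma sel_unitary m k (s : 'I_k -> 'I_m) (sinj : injective s) (P : 'M[C]_m) :
  P \is unitarymx -> rowsub s (1%:M : 'M[C]_m) *m P \is unitarymx.
Proof.
move=> PU; apply/unitarymxP; rewrite -/(adjmx _) adjmxM mulmxA.
rewrite -(mulmxA _ P) unitary_adjE // mulmx1.
have := sel_lemma sinj (const_mx 1); rewrite diag_const_mx mulmx1 => ->.
by apply/matrixP => i j; rewrite !mxE.
Qed.

Lemma qform_sel m k (s : 'I_k -> 'I_m) (sinj : injective s) (y : 'rV[C]_k) d :
  y *m rowsub s (1%:M : 'M[C]_m) *m diag_mx d *m adjmx (rowsub s (1%:M : 'M[C]_m)) *m adjmx y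
  = y *m diag_mx (\row_j d 0 (s j)) *m adjmx y.
Proof. by rewrite -sel_lemma // !mulmxA. Qed.

Lemma sylv_le m (X P P' S S' : 'M[C]_m) (d d' : 'rV[C]_m) :
  X \in unitmx -> P \is unitarymx -> P' \is unitarymx ->
  (forall i, d 0 i \is Num.real) ->
  S = adjmx P *m diag_mx d *m P -> S' = adjmx P' *m diag_mx d' *m P' ->
  S' = X *m S *m adjmx X ->
  leq #|[pred i | 0 < d' 0 i]| #|[pred i | 0 < d 0 i]|.
Proof.
move=> Xu PU P'U dreal hS hS' hSS.
set Sp := [pred i | 0 < d' 0 i]; set Sn := [pred i | ~~ (0 < d 0 i)].
pose sp := @enum_val _ Sp; pose sn := @enum_val _ Sn.
have spI : injective sp := @enum_val_inj _ _.
have snI : injective sn := @enum_val_inj _ _.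
pose Rp := rowsub sp (1%:M : 'M[C]_m) *m P' *m X.
pose Rn := rowsub sn (1%:M : 'M[C]_m) *m P.
have rRp : \rank Rp = #|Sp|.
  by rewrite mxrankMfree ?row_free_unit // mxrank_unitary // sel_unitary.
have rRn : \rank Rn = #|Sn|.
  by rewrite mxrank_unitary // sel_unitary.
set Pd := [pred i | 0 < d 0 i].
have cSn : #|Sn| = subn m #|Pd|.
  have h := cardC Pd; rewrite card_ord in h.
  have -> : #|Sn| = #|[predC Pd]| by apply: eq_card => i; rewrite !inE.
  apply/eqP; rewrite -(eqn_add2l #|Pd|) h subnKC //.
  exact: (leq_trans (max_card _) (eq_leq (card_ord m))).
rewrite leqNgt; apply/negP => hlt.
have : \rank (Rp :&: Rn)%MS != 0.
  have e1 := mxrank_sum_cap Rp Rn; have e2 := rank_leq_col (Rp + Rn)%MS.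
  move: (\rank (Rp + Rn)%MS) (\rank (Rp :&: Rn)%MS) e1 e2 => x y e1 e2.
  rewrite rRp rRn cSn in e1.
  have := max_card (mem Pd); rewrite card_ord.
  move: hlt e1 e2; set a := #|Sp|; set b := #|Pd|. lia.
rewrite mxrank_eq0 => /rowV0Pn [u]; rewrite sub_capmx => /andP[/submxP[y ->] /submxP[z]].
move=> eyz yRp0.
have y0 : y != 0 by apply: contraNneq yRp0 => ->; rewrite mul0mx.
have : 0 < (y *m Rp *m S *m adjmx (y *m Rp)) 0 0.
  rewrite /Rp !adjmxM !mulmxA -(mulmxA _ X S) -(mulmxA _ (X *m S)) -hSS hS'.
  rewrite -!mulmxA (mulmxA P') unitary_adjE // mul1mx.
  rewrite !mulmxA -(mulmxA _ P') unitary_adjE // mulmx1.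
  rewrite qform_sel //.
  by apply: qform_pos => // j; rewrite mxE; have := enum_valP j.
rewrite eyz /Rn !adjmxM !mulmxA hS -!mulmxA (mulmxA P) unitary_adjE // mul1mx.
rewrite !mulmxA -(mulmxA _ P) unitary_adjE // mulmx1.
rewrite qform_sel //.
move=> hp; suff : (z *m diag_mx (\row_j d 0 (sn j)) *m adjmx z) 0 0 <= 0.
  by rewrite (lt_geF hp).
apply: qform_npos => j; rewrite mxE; have := enum_valP j.
rewrite /Sn inE => /negP ndp.
have := dreal (sn j); rewrite realE => /orP[h|//].
rewrite le_eqVlt in h; case/orP: h => [/eqP <-|h] //; by case: ndp.
Qed.

End Sylv.
Section Roots.
Variable F : closedFieldType.

Lemma roots_multE (p : {poly F}) c (t : seq F) : c != 0 ->
  p = c *: \prod_(z <- t) ('X - z%:P) -> perm_eq (roots_mult p) t.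
Proof.
move=> c0 hp; rewrite /roots_mult; case: closed_field_poly_normal => r /= Hr.
have lp : lead_coef p = c.
  by rewrite hp lead_coefZ (monicP (monic_prod_XsubC _ _ _)) mulr1.
apply: prod_XsubC_eq; apply: (scalerI c0); by rewrite -hp -lp -Hr.
Qed.

Lemma mupE (p : {poly F}) c (t : seq F) x : c != 0 ->
  p = c *: \prod_(z <- t) ('X - z%:P) -> mup x p = count_mem x t.
Proof.
move=> c0 ->; rewrite -mul_polyC mupMr ?mu_prod_XsubC //.
by rewrite rootC.
Qed.

End Roots.

Section CP.
Variable R : comUnitRingType.
Lemma char_poly_similar n (P M : 'M[R]_n) : P \in unitmx ->
  char_poly (invmx P *m M *m P) = char_poly M.
Proof.
move=> Pu; rewrite /char_poly /char_poly_mx.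
have E : ('X%:M : 'M[{poly R}]_n) = map_mx polyC (invmx P) *m 'X%:M *m map_mx polyC P.
  by rewrite -mulmxA -scalar_mxC mulmxA -map_mxM mulVmx // map_mx1 mul1mx.
rewrite {1}E !map_mxM -mulmxBl -mulmxBr !det_mulmx mulrC mulrA -det_mulmx -map_mxM.
by rewrite mulmxV // map_mx1 det1 mul1r.
Qed.
End CP.

Lemma char_poly_diag (R : comNzRingType) n (d : 'rV[R]_n) :
  char_poly (diag_mx d) = \prod_(z <- [seq d 0 i | i <- enum 'I_n]) ('X - z%:P).
Proof.
rewrite char_poly_trig ?diag_mx_is_trig // big_map big_enum /=.
by apply: eq_bigr => i _; rewrite mxE eqxx.
Qed.

Lemma count_enum_card (T : finType) (a : pred T) : count a (enum T) = #|a|.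
Proof. rewrite cardE /enum_mem size_filter count_filter. by apply: eq_count => x; rewrite !inE andbT. Qed.

Section Spec.
Variable C : numClosedFieldType.

Lemma herm_spectral n (S : 'M[C]_n) : adjmx S = S ->
  exists P : 'M[C]_n, exists d : 'rV[C]_n,
    [/\ P \is unitarymx, (forall i, d 0 i \is Num.real) &
        S = adjmx P *m diag_mx d *m P].
Proof.
move=> hS.
have hh : S \is hermsymmx by apply/is_hermitianmxP; rewrite expr0 scale1r; exact/esym.
exists (spectralmx S), (spectral_diag S); split.
- exact: spectral_unitarymx.
- by move=> i; have /mxOverP := hermitian_spectral_diag_real hh; apply.
- have /orthomx_spectralP := hermitian_normalmx hh.
  by rewrite invmx_unitary ?spectral_unitarymx.
Qed.

Lemma eig_count n (S P : 'M[C]_n) (d : 'rV[C]_n) (a : pred C) :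
  P \is unitarymx -> S = adjmx P *m diag_mx d *m P ->
  count a (eigenvalues S) = #|[pred i | a (d 0 i)]|.
Proof.
move=> PU ->; have -> : adjmx P = invmx P by rewrite invmx_unitary.
rewrite /eigenvalues char_poly_similar ?unitarymx_unit //.
have hp : perm_eq (roots_mult (char_poly (diag_mx d)))
   [seq d 0 i | i <- enum 'I_n].
  by apply: (roots_multE (c := 1)); rewrite ?oner_neq0 // scale1r char_poly_diag.
by rewrite (permP hp) count_map count_enum_card.
Qed.

Lemma card_row_mx0 r s (d : 'rV[C]_r) (a : pred C) :
  #|[pred i | a ((row_mx d (0 : 'rV[C]_s)) 0 i)]| = addn #|[pred i | a (d 0 i)]| (muln (a 0) s).
Proof.
rewrite -!sum1_card big_split_ord /=; congr (_ + _)%N.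
  by apply: eq_bigl => i; rewrite !inE row_mxEl.
rewrite (eq_bigl (fun=> a 0)); last by move=> i; rewrite !inE row_mxEr mxE.
case: (a 0); last by rewrite big_pred0.
by rewrite mul1n -[in RHS](card_ord s) -sum1_card.
Qed.


Lemma adjmx_inv n (X : 'M[C]_n) : adjmx (invmx X) = invmx (adjmx X).
Proof. by rewrite /adjmx trmx_inv map_invmx. Qed.

Lemma sylv_pos m (X P P' S : 'M[C]_m) (d d' : 'rV[C]_m) :
  X \in unitmx -> P \is unitarymx -> P' \is unitarymx ->
  (forall i, d 0 i \is Num.real) -> (forall i, d' 0 i \is Num.real) ->
  S = adjmx P *m diag_mx d *m P ->
  X *m S *m adjmx X = adjmx P' *m diag_mx d' *m P' ->
  #|[pred i | 0 < d' 0 i]| = #|[pred i | 0 < d 0 i]|.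
Proof.
move=> Xu PU P'U dr d'r hS hS'.
apply/eqP; rewrite eqn_leq; apply/andP; split.
  exact: (sylv_le Xu PU P'U dr hS (erefl _) (esym hS')).
have Xau : adjmx X \in unitmx by rewrite adjmx_unit.
apply: (@sylv_le _ m (invmx X) P' P (X *m S *m adjmx X) S d' d) => //.
  by rewrite unitmx_inv.
by rewrite adjmx_inv !mulmxA mulVmx // mul1mx mulmxK.
Qed.

Lemma sylv_neg m (X P P' S : 'M[C]_m) (d d' : 'rV[C]_m) :
  X \in unitmx -> P \is unitarymx -> P' \is unitarymx ->
  (forall i, d 0 i \is Num.real) -> (forall i, d' 0 i \is Num.real) ->
  S = adjmx P *m diag_mx d *m P ->
  X *m S *m adjmx X = adjmx P' *m diag_mx d' *m P' ->
  #|[pred i | d' 0 i < 0]| = #|[pred i | d 0 i < 0]|.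
Proof.
move=> Xu PU P'U dr d'r hS hS'.
have := @sylv_pos m X P P' (- S) (- d) (- d') Xu PU P'U.
have e1 : forall (e : 'rV[C]_m), #|[pred i | 0 < (- e) 0 i]| = #|[pred i | e 0 i < 0]|.
  by move=> e; apply: eq_card => i; rewrite !inE mxE oppr_gt0.
rewrite !e1; apply.
- by move=> i; rewrite mxE rpredN.
- by move=> i; rewrite mxE rpredN.
- by rewrite hS linearN /= mulmxN mulNmx.
- by rewrite mulmxN mulNmx hS' linearN /= mulmxN mulNmx.
Qed.

End Spec.

Section Core.
Variable C : numClosedFieldType.

Lemma exQ r s (B : 'M[C]_(r + s)) : \rank B = r ->
  exists Q1 : 'M[C]_(r, r + s), exists Q2 : 'M[C]_(s, r + s),
    col_mx Q1 Q2 \is unitarymx /\ B *m adjmx Q2 = 0.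
Proof.
move=> rB.
have U := schmidt_complete_unitarymx B; rewrite /schmidt_complete in U.
set Y2 := schmidt (row_base (orthomx _ _ B)) in U.
have hO : B *m adjmx Y2 = 0.
  apply/orthomx1P.
  rewrite orthomx_sym /Y2 eqmx_schmidt_free ?row_base_free // eq_row_base.
  by [].
move: (schmidt (row_base B)) Y2 U hO.
rewrite rank_ortho rB addKn => Y1 Y2 U hO.
by exists Y1, Y2.
Qed.


Lemma cardE_sum (T : finType) (p : pred T) : #|p| = \sum_(i : T) (p i : nat).
Proof. by rewrite -sum1_card big_mkcond /=; apply: eq_bigr => i _; rewrite -topredE /=; case: (p i). Qed.

Lemma card_trichot m (e : 'rV[C]_m) : (forall i, e 0 i \is Num.real) ->
  addn (addn #|[pred i | 0 < e 0 i]| #|[pred i | e 0 i < 0]|) #|[pred i | e 0 i == 0]| = m.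
Proof.
move=> er; rewrite !cardE_sum -!big_split /=.
rewrite -[in RHS](card_ord m) cardE_sum; apply: eq_bigr => i _ /=.
have hr := er i.
by case: (real_ltgtP hr (real0 C)).
Qed.


Lemma core r s (A B : 'M[C]_(r + s)) :
  \rank B = r ->
  \rank (row_mx A B) = (r + s)%N ->
  adjmx (A *m adjmx B) = A *m adjmx B ->
  [/\ detpencil A B != 0,
      npos_zeros (detpencil A B) = n_plus A B,
      nneg_zeros (detpencil A B) = n_minus A B &
      (root (detpencil A B) 0 ->
         (mup 0 (detpencil A B) + n_plus A B + n_minus A B)%N = \rank B
         /\ (mup 0 (detpencil A B) <= n_zero A B)%N)].
Proof.
move=> rB rAB hS.
have [Q1 [Q2 [QU hQ2]]] := exQ rB.
set Q := col_mx Q1 Q2 in QU.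
have Qu : Q \in unitmx := unitarymx_unit QU.
have QaQ : adjmx Q *m Q = 1%:M := unitary_adjE' QU.
set B1 := B *m adjmx Q1.
have hBQ : B *m adjmx Q = row_mx B1 0 by rewrite adjmx_col mul_mx_row hQ2.
have rB1 : \rank B1 = r.
  by rewrite -(@rank_row_mx0 _ _ _ s) -hBQ mxrankMfree ?row_free_unit ?adjmx_unit.
have [X [Xu hXB1]] : exists X : 'M[C]_(r + s), X \in unitmx /\ X *m B1 = pid_mx r.
  have := mulmx_ebase B1; rewrite rB1 => hE.
  set U := row_ebase B1 in hE; set L := col_ebase B1 in hE.
  have blu : block_mx U 0 0 (1%:M : 'M[C]_s) \in unitmx.
    by rewrite unitmxE det_ublock det1 mulr1 -unitmxE row_ebase_unit.
  have Lblu : L *m block_mx U 0 0 (1%:M : 'M[C]_s) \in unitmx.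
    by rewrite unitmx_mul col_ebase_unit.
  exists (invmx (L *m block_mx U 0 0 (1%:M : 'M[C]_s))); split.
    by rewrite unitmx_inv.
  have hp : pid_mx r *m U = block_mx U 0 0 (1%:M : 'M[C]_s) *m pid_mx r.
    rewrite pid_mx_col mul_col_mx mul_block_col mul1mx mul0mx.
    by rewrite mulmx1 !mulmx0 mul0mx addr0 add0r.
  by rewrite -hE -(mulmxA L) hp (mulmxA L) mulKmx.
set A' := X *m A *m adjmx Q.
set B' := X *m B *m adjmx Q.
have hB' : B' = block_mx 1%:M 0 0 0.
  by rewrite /B' -mulmxA hBQ mul_mx_row hXB1 mulmx0 pid_mx_col block_mxEh col_mx0.
set a := ulsubmx A'; set b := ursubmx A'; set c := dlsubmx A'; set d := drsubmx A'.
have hA' : A' = block_mx a b c d by rewrite submxK.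
set S := A *m adjmx B in hS.
have hSS : A' *m adjmx B' = X *m S *m adjmx X.
  rewrite /A' /B' !adjmxM adjmxK !mulmxA -(mulmxA (X *m A) (adjmx Q) Q) QaQ mulmx1.
  by [].
have eS : S = A *m adjmx B by [].
clearbody S.
have hS'h : adjmx (A' *m adjmx B') = A' *m adjmx B'.
  by rewrite hSS !adjmxM adjmxK hS !mulmxA.
have hS'blk : A' *m adjmx B' = block_mx a 0 c 0.
  rewrite {1}hA' hB' adjmx_block !adjmx0 adjmx1 mulmx_block !mulmx0 !mulmx1.
  by rewrite !addr0.
have [ha hc] : adjmx a = a /\ c = 0.
  move: hS'h; rewrite hS'blk adjmx_block !adjmx0 => /eq_block_mx [h1 h2 h3 h4].
  by split.
have du : d \in unitmx.
  apply/negPn/negP => dnu.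
  have : kermx d != 0.
    rewrite -mxrank_eq0 mxrank_ker subn_eq0 -ltnNge ltn_neqAle rank_leq_row andbT.
    by rewrite -row_free_unit in dnu.
  case/rowV0Pn => v /sub_kermxP vd v0.
  pose w := row_mx (0 : 'rV[C]_r) v.
  have hw : w *m row_mx A' B' = 0.
    rewrite mul_mx_row {1}hA' hB' !mul_row_block hc vd !mul0mx !mulmx0 !addr0.
    by rewrite !row_mx0.
  have hrow : row_mx A' B' = X *m row_mx A B *m block_mx (adjmx Q) 0 0 (adjmx Q).
    by rewrite mul_mx_row mul_row_block !mulmx0 addr0 add0r.
  have blu : block_mx (adjmx Q) 0 0 (adjmx Q) \in unitmx.
    by rewrite unitmxE det_ublock unitrM -!unitmxE adjmx_unit Qu.
  have ABfree : row_free (row_mx A B) by rewrite /row_free rAB.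
  move: hw; rewrite hrow !mulmxA.
  move/eqP; rewrite mulmx_free_eq0 ?row_free_unit // mulmx_free_eq0 //.
  rewrite mulmx_free_eq0 ?row_free_unit // row_mx_eq0 eqxx /=.
  by apply/negP.
have hf : detpencil A' B' = (\det X * \det (adjmx Q))%:P * detpencil A B.
  rewrite /detpencil /A' /B' !map_mxM scalemxAl scalemxAr -mulmxBl -mulmxBr.
  by rewrite !det_mulmx !det_map_mx polyCM mulrAC.
have hf' : detpencil A' B' = ((-1) ^+ r * \det d)%:P * char_poly a.
  rewrite /detpencil {1}hA' hB' hc !map_block_mx !map_mx0 map_mx1 scale_block_mx.
  rewrite !scaler0 scalemx1 opp_block_mx add_block_mx !oppr0 !addr0.
  rewrite det_ublock det_map_mx -opprB -scaleN1r detZ /char_poly /char_poly_mx.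
  by rewrite polyCM rmorph_sign mulrAC.
have [P [dl [PU dlr ha']]] := herm_spectral ha.
set ds := [seq dl 0 i | i <- enum 'I_r].
have k0 : \det X * \det (adjmx Q) != 0.
  by rewrite mulf_neq0 // -unitfE -unitmxE ?adjmx_unit.
have k'0 : (-1) ^+ r * \det d != 0.
  by rewrite mulf_neq0 ?signr_eq0 // -unitfE -unitmxE.
set cc := (\det X * \det (adjmx Q))^-1 * ((-1) ^+ r * \det d).
have c0 : cc != 0 by rewrite mulf_neq0 ?invr_eq0.
have hcp : char_poly a = \prod_(z <- ds) ('X - z%:P).
  have eP : adjmx P = invmx P by rewrite invmx_unitary.
  rewrite ha' eP.
  by rewrite char_poly_similar ?unitarymx_unit // char_poly_diag.
have hfc : detpencil A B = cc *: \prod_(z <- ds) ('X - z%:P).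
  rewrite -hcp -mul_polyC /cc polyCM -mulrA -hf' hf mulrA -polyCM mulVf //.
  by rewrite mul1r.
have pf : perm_eq (roots_mult (detpencil A B)) ds := roots_multE c0 hfc.
have [P0 [d0 [P0U d0r hS0]]] := herm_spectral hS.
pose P' := block_mx P 0 0 (1%:M : 'M[C]_s).
pose d' := row_mx dl (0 : 'rV[C]_s).
have P'U : P' \is unitarymx.
  apply/unitarymxP; rewrite -/(adjmx P') adjmx_block !adjmx0 adjmx1 mulmx_block.
  rewrite unitary_adjE // !mulmx0 !mul0mx !mulmx1 !addr0 add0r.
  by rewrite -scalar_mx_block.
have d'r : forall i, d' 0 i \is Num.real.
  move=> i; rewrite /d'; case: (split_ordP i) => j ->.
    by rewrite row_mxEl.
  by rewrite row_mxEr mxE real0.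
have hS' : X *m S *m adjmx X = adjmx P' *m diag_mx d' *m P'.
  rewrite -hSS hS'blk hc /P' /d' diag_mx_row linear0 adjmx_block !adjmx0 adjmx1.
  rewrite !mulmx_block !mulmx0 !mul0mx !addr0 !mul0mx.
  by rewrite !addr0 -ha'.
have cpos := sylv_pos Xu P0U P'U d0r d'r hS0 hS'.
have cneg := sylv_neg Xu P0U P'U d0r d'r hS0 hS'.
have ep : n_plus A B = #|[pred i | 0 < dl 0 i]|.
  rewrite /n_plus -eS (eig_count _ P0U hS0) /= -cpos card_row_mx0 ltxx.
  by rewrite mul0n addn0.
have en : n_minus A B = #|[pred i | dl 0 i < 0]|.
  rewrite /n_minus -eS (eig_count _ P0U hS0) /= -cneg (@card_row_mx0 _ _ _ _ (fun z => z < 0)) ltxx.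
  by rewrite mul0n addn0.
have ez : n_zero A B = addn #|[pred i | dl 0 i == 0]| s.
  rewrite /n_zero -eS (eig_count _ P0U hS0).
  have t0 := card_trichot d0r; have t' := card_trichot d'r.
  rewrite -cpos -cneg in t0.
  have : #|[pred i | d0 0 i == 0]| = #|[pred i | d' 0 i == 0]|.
    move: t0 t'; set x := #|[pred i | 0 < d' 0 i]|; set y := #|[pred i | d' 0 i < 0]|.
    lia.
  by move=> ->; rewrite (@card_row_mx0 _ _ _ _ (fun z => z == 0)) eqxx mul1n.
have ecnt : forall (p : pred C), count p (roots_mult (detpencil A B)) = #|[pred i | p (dl 0 i)]|.
  by move=> p; rewrite (permP pf) count_map count_enum_card.
have emup : mup 0 (detpencil A B) = #|[pred i | dl 0 i == 0]|.
  by rewrite (mupE _ c0 hfc) count_map count_enum_card.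
have tr := card_trichot dlr.
split.
- rewrite hfc scale_poly_eq0 negb_or c0 /=.
  by rewrite monic_neq0 // monic_prod_XsubC.
- by rewrite /npos_zeros ecnt ep.
- by rewrite /nneg_zeros ecnt en.
move=> _; rewrite emup ep en ez rB; split.
  move: tr; set x := #|[pred i | 0 < dl 0 i]|; set y := #|[pred i | dl 0 i < 0]|.
  lia.
by rewrite leq_addr.
Qed.

End Core.

Unset Implicit Arguments.
Set Strict Implicit.

Theorem lemma3p8 (R : rcfType) (n : nat) (A B : 'M[R[i]]_n) :
  \rank (row_mx A B) = n ->
  adjmx (A *m adjmx B) = A *m adjmx B ->
  [/\ detpencil A B != 0,
      npos_zeros (detpencil A B) = n_plus A B,
      nneg_zeros (detpencil A B) = n_minus A B &
      (root (detpencil A B) 0 ->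
         (mup 0 (detpencil A B) + n_plus A B + n_minus A B)%N = \rank B
         /\ (mup 0 (detpencil A B) <= n_zero A B)%N)].
Proof.
move=> rk herm.
have [r rB] : exists r, \rank B = r by eexists.
have [s e] : exists s, (r + s)%N = n by exists (n - r)%N; rewrite -rB subnKC ?rank_leq_row.
subst n.
exact: core.
Qed.
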